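(* Let $\alpha,\beta\in(0,1)$ with $\alpha+\beta>1$. Then for all $v\in\mathcal{C}^\alpha(L(\mathbb{R}^d,\mathbb{R}^n))$ and $w\in\mathcal{C}^\beta(\mathbb{R}^d)$ the series defining $L(v,w)$ converges uniformly, $L(v,w)\in\mathcal{C}^{\alpha+\beta}(\mathbb{R}^n)$, and $\|L(v,w)\|_{\alpha+\beta}\lesssim\|v\|_\alpha\|w\|_\beta$; i.e. $L$ is a bounded bilinear operator from $\mathcal{C}^\alpha\times\mathcal{C}^\beta$ to $\mathcal{C}^{\alpha+\beta}$.
   Context: Index set: pairs $(p,m)$ with either $p=-1,m=0$, or $p\in\mathbb{N}=\{0,1,2,\dots\}$ and $0\le m\le 2^p$. For $p\in\mathbb{N}$, $1\le m\le 2^p$ set $t^0_{pm}=(m-1)2^{-p}$, $t^1_{pm}=(2m-1)2^{-p-1}$, $t^2_{pm}=m2^{-p}$. Rescaled Haar functions: for $p\in\mathbb{N}$, $1\le m\le 2^p$, $\chi_{pm}=2^p$ on $[t^0_{pm},t^1_{pm})$, $=-2^p$ on $[t^1_{pm},t^2_{pm})$, $=0$ elsewhere; $\chi_{00}\equiv1$; $\chi_{p0}\equiv0$ for $p\ge1$. Rescaled Schauder functions: $\varphi_{pm}(t)=\int_0^t\chi_{pm}(s)\,ds$ for $p\in\mathbb{N}$, and $\varphi_{-10}\equiv1$. For continuous $f:[0,1]\to E$ ($E$ a finite-dimensional normed space), coefficients: $f_{-10}=f(0)$, $f_{00}=f(1)-f(0)$, $f_{p0}=0$ for $p\ge1$,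 $f_{pm}=2f(t^1_{pm})-f(t^0_{pm})-f(t^2_{pm})$ for $p\in\mathbb{N},m\ge1$. Schauder blocks: $\Delta_pf=\sum_{m=0}^{2^p}f_{pm}\varphi_{pm}$ ($p\ge-1$), $S_pf=\sum_{q=-1}^p\Delta_qf$ (piecewise linear). For $\alpha>0$, $\|f\|_\alpha:=\sup_{p,m}2^{p\alpha}|f_{pm}|$ and $\mathcal{C}^\alpha(E):=\{f\in C([0,1],E):\|f\|_\alpha<\infty\}$. For $g$ piecewise linear (or Lipschitz), $\int_0^tf\,dg:=\int_0^tf(s)g'(s)\,ds$ and $\int_0^t dg\,f:=\int_0^t g'(s)f(s)\,ds$. Lévy area: for continuous $v:[0,1]\to L(\mathbb{R}^d,\mathbb{R}^n)$, $w:[0,1]\to\mathbb{R}^d$, \[ L(v,w):=\sum_{p\ge0}\Big(\int_0^\cdot\Delta_pv(s)\,d(S_{p-1}w)(s)-\int_0^\cdot d(S_{p-1}v)(s)\,\Delta_pw(s)\Big) \] whenever this series converges uniformly. $\lesssim$ hides a constant depending only on $\alpha,\beta$. *)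

(* Defs.v *)
From Stdlib Require Import Reals List Classical ClassicalEpsilon.
Import ListNotations.
Open Scope R_scope.

Definition rsum (k : nat) (f : nat -> R) : R :=
  fold_right Rplus 0 (map f (seq 0 k)).

(* Riemann integral int_0^t f(s) ds (Stdlib's RiemannInt, which does not
   depend on the integrability proof); an unspecified value if f is not
   Riemann integrable on [0,t]. *)
Definition Rint0 (f : R -> R) (t : R) : R :=
  epsilon (inhabits 0)
    (fun r => exists pr : Riemann_integrable f 0 t, RiemannInt pr = r).

(* the derivative g'(s) where it exists (unspecified at the finitely many
   kinks of a piecewise linear g; irrelevant for the integral). *)
Definition deriv (g : R -> R) (s : R) : R :=
  epsilon (inhabits 0) (fun l => derivable_pt_lim g s l).

(* dyadic points, p in N, 1 <= m <= 2^p *)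
Definition t0 (p m : nat) : R := (INR m - 1) / 2 ^ p.
Definition t1 (p m : nat) : R := (2 * INR m - 1) / 2 ^ (S p).
Definition t2 (p m : nat) : R := INR m / 2 ^ p.

(* rescaled Haar functions chi_{pm}, p in N, 0 <= m <= 2^p *)
Definition chi (p m : nat) (s : R) : R :=
  match m with
  | O => match p with O => 1 | S _ => 0 end
  | S _ =>
      if Rle_dec (t0 p m) s then
        if Rlt_dec s (t1 p m) then 2 ^ p
        else if Rlt_dec s (t2 p m) then - 2 ^ p else 0
      else 0
  end.

(* rescaled Schauder functions phi_{pm}(t) = int_0^t chi_{pm}, p in N
   (phi_{-1,0} = 1 is handled separately below). *)
Definition phi (p m : nat) (t : R) : R := Rint0 (chi p m) t.

(* Schauder coefficients of a scalar function, p in N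
   (the coefficient f_{-1,0} = f(0) is handled separately). *)
Definition coef (f : R -> R) (p m : nat) : R :=
  match m with
  | O => match p with O => f 1 - f 0 | S _ => 0 end
  | S _ => 2 * f (t1 p m) - f (t0 p m) - f (t2 p m)
  end.

Definition Delta (f : R -> R) (p : nat) (t : R) : R :=
  rsum (S (2 ^ p)) (fun m => coef f p m * phi p m t).

(* Spre f k = S_{k-1} f :  S_{-1} f = Delta_{-1} f = f(0) * phi_{-1,0} = f(0),
   S_{p} f = S_{p-1} f + Delta_p f *)
Fixpoint Spre (f : R -> R) (k : nat) (t : R) : R :=
  match k with
  | O => f 0
  | S k' => Spre f k' t + Delta f k' t
  end.

(* Norms on the finite dimensional spaces: sup-norm on R^n (vectors are
   functions nat -> R, components 0..n-1) and the induced operator norm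
   (max row sum) on L(R^d,R^n) = n x d matrices (nat -> nat -> R). *)
Definition vnorm (n : nat) (x : nat -> R) : R :=
  fold_right Rmax 0 (map (fun i => Rabs (x i)) (seq 0 n)).
Definition mnorm (n d : nat) (A : nat -> nat -> R) : R :=
  fold_right Rmax 0 (map (fun i => rsum d (fun j => Rabs (A i j))) (seq 0 n)).

Definition cont01 (f : R -> R) : Prop :=
  forall t, 0 <= t <= 1 -> forall eps, 0 < eps -> exists delta, 0 < delta /\
    forall s, 0 <= s <= 1 -> Rabs (s - t) < delta -> Rabs (f s - f t) < eps.

(* K bounds sup_{p,m} 2^{p alpha} |f_{pm}|, i.e. ||f||_alpha <= K,
   over the whole index set (p = -1, m = 0) and p in N, 0 <= m <= 2^p. *)
Definition HolderBoundV (n : nat) (alpha : R) (f : R -> nat -> R) (K : R) : Prop :=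
  Rpower 2 (- alpha) * vnorm n (f 0) <= K /\
  forall p m, (m <= 2 ^ p)%nat ->
    Rpower 2 (INR p * alpha) * vnorm n (fun i => coef (fun u => f u i) p m) <= K.

Definition HolderBoundM (n d : nat) (alpha : R) (f : R -> nat -> nat -> R) (K : R)
  : Prop :=
  Rpower 2 (- alpha) * mnorm n d (f 0) <= K /\
  forall p m, (m <= 2 ^ p)%nat ->
    Rpower 2 (INR p * alpha) *
      mnorm n d (fun i j => coef (fun u => f u i j) p m) <= K.

Definition CalphaV (n : nat) (alpha : R) (f : R -> nat -> R) (K : R) : Prop :=
  (forall i, (i < n)%nat -> cont01 (fun t => f t i)) /\ HolderBoundV n alpha f K.

Definition CalphaM (n d : nat) (alpha : R) (f : R -> nat -> nat -> R) (K : R)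
  : Prop :=
  (forall i j, (i < n)%nat -> (j < d)%nat -> cont01 (fun t => f t i j)) /\
  HolderBoundM n d alpha f K.

Definition levy_term (d : nat) (v : R -> nat -> nat -> R) (w : R -> nat -> R)
  (p : nat) (t : R) (i : nat) : R :=
  Rint0 (fun s => rsum d (fun j =>
           Delta (fun u => v u i j) p s * deriv (Spre (fun u => w u j) p) s)) t
  - Rint0 (fun s => rsum d (fun j =>
           deriv (Spre (fun u => v u i j) p) s * Delta (fun u => w u j) p s)) t.

Definition levy_partial (d : nat) v w (N : nat) (t : R) (i : nat) : R :=
  rsum N (fun p => levy_term d v w p t i).

Definition levy_converges_to (n d : nat) v w (L : R -> nat -> R) : Prop :=
  forall eps, 0 < eps -> exists N0, forall N, (N0 <= N)%nat ->
    forall t, 0 <= t <= 1 -> forall i, (i < n)%nat ->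
      Rabs (levy_partial d v w N t i - L t i) < eps.

(* Main.v *)
Require Import Defs.
From Stdlib Require Import Reals Lra Lia List Classical ClassicalEpsilon.
From Coquelicot Require Import Coquelicot.
Require Import Defs.
Open Scope R_scope.

Lemma fold_plus_app l x : fold_right Rplus 0 (l ++ x :: nil) = fold_right Rplus 0 l + x.
Proof. induction l; simpl; [lra|rewrite IHl; lra]. Qed.

Lemma rsum_S n f : rsum (S n) f = rsum n f + f n.
Proof. unfold rsum. rewrite seq_S, map_app. simpl. apply fold_plus_app. Qed.

Lemma rsum_0 f : rsum 0 f = 0.
Proof. reflexivity. Qed.

Lemma rsum_ext n f g : (forall j, (j < n)%nat -> f j = g j) -> rsum n f = rsum n g.
Proof. induction n; intros H; [reflexivity|]. rewrite !rsum_S, IHn by (intros; apply H; lia).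
  rewrite H by lia; reflexivity. Qed.

Lemma rsum_plus n f g : rsum n (fun j => f j + g j) = rsum n f + rsum n g.
Proof. induction n; [simpl; unfold rsum; simpl; lra|]. rewrite !rsum_S, IHn; lra. Qed.

Lemma rsum_minus n f g : rsum n (fun j => f j - g j) = rsum n f - rsum n g.
Proof. induction n; [simpl; unfold rsum; simpl; lra|]. rewrite !rsum_S, IHn; lra. Qed.

Lemma rsum_scal n c f : rsum n (fun j => f j * c) = rsum n f * c.
Proof. induction n; [unfold rsum; simpl; lra|]. rewrite !rsum_S, IHn; lra. Qed.

Lemma rsum_mono n f g : (forall j, (j < n)%nat -> f j <= g j) -> rsum n f <= rsum n g.
Proof. induction n; intros H; [unfold rsum; simpl; lra|]. rewrite !rsum_S.
  assert (rsum n f <= rsum n g) by (apply IHn; intros; apply H; lia).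
  specialize (H n ltac:(lia)); lra. Qed.

Lemma rsum_abs n f : Rabs (rsum n f) <= rsum n (fun j => Rabs (f j)).
Proof. induction n; [unfold rsum; simpl; rewrite Rabs_R0; lra|]. rewrite !rsum_S.
  eapply Rle_trans; [apply Rabs_triang|lra]. Qed.

Lemma rsum_zero n f : (forall j, (j < n)%nat -> f j = 0) -> rsum n f = 0.
Proof. intros H. transitivity (rsum n (fun _ => 0)). apply rsum_ext; auto.
  clear H; induction n; [reflexivity|rewrite rsum_S, IHn; lra]. Qed.

Lemma rsum_nonneg n f : (forall j, (j < n)%nat -> 0 <= f j) -> 0 <= rsum n f.
Proof. intros H. rewrite <- (rsum_zero n (fun _ => 0)) by auto. apply rsum_mono; auto. Qed.

Lemma rsum_single n f k : (k < n)%nat -> (forall j, (j < n)%nat -> j <> k -> f j = 0) ->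
  rsum n f = f k.
Proof. induction n; intros Hk H; [lia|]. rewrite rsum_S.
  destruct (Nat.eq_dec k n) as [->|Hne].
  - rewrite rsum_zero; [lra|]. intros; apply H; lia.
  - rewrite IHn by (try lia; intros; apply H; lia). rewrite (H n) by lia. lra. Qed.

Lemma rsum_abs_prod n x y M : (forall j, (j < n)%nat -> Rabs (y j) <= M) ->
  Rabs (rsum n (fun j => x j * y j)) <= rsum n (fun j => Rabs (x j)) * M.
Proof. intros H. eapply Rle_trans; [apply rsum_abs|]. rewrite <- rsum_scal.
  apply rsum_mono; intros j Hj. rewrite Rabs_mult. apply Rmult_le_compat_l; [apply Rabs_pos|auto]. Qed.

Lemma rsum_abs_prod' n x y M : (forall j, (j < n)%nat -> Rabs (x j) <= M) ->
  Rabs (rsum n (fun j => x j * y j)) <= rsum n (fun j => Rabs (y j)) * M.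
Proof. intros H. rewrite (rsum_ext n _ (fun j => y j * x j)) by (intros; ring).
  apply rsum_abs_prod; auto. Qed.

Lemma fold_max_ge l y : In y l -> y <= fold_right Rmax 0 l.
Proof. induction l; simpl; [tauto|]. intros [->|H]; [apply Rmax_l|].
  eapply Rle_trans; [apply IHl; auto|apply Rmax_r]. Qed.

Lemma fold_max_le l K : 0 <= K -> (forall y, In y l -> y <= K) -> fold_right Rmax 0 l <= K.
Proof. induction l; simpl; intros HK H; auto. apply Rmax_lub; auto. Qed.

Lemma fold_max_nonneg l : 0 <= fold_right Rmax 0 l.
Proof. induction l; simpl; [lra|]. eapply Rle_trans; [apply IHl|apply Rmax_r]. Qed.

Lemma vnorm_nonneg n x : 0 <= vnorm n x.
Proof. apply fold_max_nonneg. Qed.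
Lemma mnorm_nonneg n d A : 0 <= mnorm n d A.
Proof. apply fold_max_nonneg. Qed.

Lemma vnorm_ge n x i : (i < n)%nat -> Rabs (x i) <= vnorm n x.
Proof. intros Hi. apply fold_max_ge. apply (in_map (fun i => Rabs (x i))). apply in_seq. lia. Qed.

Lemma vnorm_le n x K : 0 <= K -> (forall i, (i < n)%nat -> Rabs (x i) <= K) -> vnorm n x <= K.
Proof. intros HK H. apply fold_max_le; auto. intros y Hy. apply in_map_iff in Hy.
  destruct Hy as [i [<- Hi]]. apply in_seq in Hi. apply H; lia. Qed.

Lemma mnorm_ge n d A i : (i < n)%nat -> rsum d (fun j => Rabs (A i j)) <= mnorm n d A.
Proof. intros Hi. apply fold_max_ge. apply (in_map (fun i => rsum d (fun j => Rabs (A i j)))). apply in_seq. lia. Qed.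

Lemma Rint0_eq g t v : is_RInt g 0 t v -> Rint0 g t = v.
Proof. intros H. unfold Rint0.
  assert (Hex : exists r, exists pr : Riemann_integrable g 0 t, RiemannInt pr = r).
  { exists (RiemannInt (ex_RInt_Reals_0 g 0 t (ex_intro _ v H))). eexists; reflexivity. }
  destruct (epsilon_spec (inhabits 0) _ Hex) as [pr Hpr]. rewrite <- Hpr.
  rewrite <- RInt_Reals. apply is_RInt_unique; auto. Qed.

Lemma is_RInt_pc f a b c : a <= b -> (forall s, a < s < b -> f s = c) -> is_RInt f a b ((b-a)*c).
Proof. intros Hab H. assert (E : scal (b-a) c = (b-a)*c) by reflexivity. rewrite <- E. apply (is_RInt_ext (fun _ => c)).
  - intros x; rewrite Rmin_left, Rmax_right by lra. intros Hx; symmetry; apply H; auto.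
  - apply is_RInt_const. Qed.

Lemma is_RInt_Chasles' f a b c l1 l2 : is_RInt f a b l1 -> is_RInt f b c l2 -> is_RInt f a c (l1 + l2).
Proof. intros H1 H2. assert (E : plus l1 l2 = l1 + l2) by reflexivity. rewrite <- E. eapply is_RInt_Chasles; eauto. Qed.

Lemma is_RInt_val (f : R -> R) a b (l l' : R) : l = l' -> is_RInt f a b l -> is_RInt f a b l'.
Proof. intros ->; auto. Qed.

Definition hat (p m : nat) (t : R) : R :=
  if Rle_dec t (t0 p m) then 0 else if Rle_dec t (t1 p m) then 2^p*(t - t0 p m)
  else if Rle_dec t (t2 p m) then 2^p*(t2 p m - t) else 0.

Lemma pw2_pos p : 0 < 2^p.
Proof. apply pow_lt; lra. Qed.

Lemma t1_eq p m : t1 p m = (t0 p m + t2 p m)/2.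
Proof. unfold t0, t1, t2. simpl. field. apply pow_nonzero; lra. Qed.
Lemma t02 p m : t2 p m = t0 p m + / 2^p.
Proof. unfold t0, t2. field. apply pow_nonzero; lra. Qed.
Lemma t0_nonneg p m : (1 <= m)%nat -> 0 <= t0 p m.
Proof. intros H. unfold t0. apply Rmult_le_pos; [|left; apply Rinv_0_lt_compat, pw2_pos].
  apply le_INR in H. simpl in H. lra. Qed.

Lemma tord p m : t0 p m < t1 p m < t2 p m.
Proof. rewrite t1_eq, t02. pose proof (Rinv_0_lt_compat _ (pw2_pos p)). lra. Qed.

Lemma hat_left p m t : t0 p m <= t <= t1 p m -> hat p m t = 2^p*(t - t0 p m).
Proof. intros H. unfold hat. destruct (Rle_dec t (t0 p m)).
  - replace t with (t0 p m) by lra. ring.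
  - destruct (Rle_dec t (t1 p m)); [reflexivity|lra]. Qed.

Lemma hat_right p m t : t1 p m <= t <= t2 p m -> hat p m t = 2^p*(t2 p m - t).
Proof. intros H. pose proof (tord p m). pose proof (t1_eq p m). unfold hat. destruct (Rle_dec t (t0 p m)); [lra|].
  destruct (Rle_dec t (t1 p m)).
  - replace t with (t1 p m) by lra. rewrite H1. lra.
  - destruct (Rle_dec t (t2 p m)); [reflexivity|lra]. Qed.

Lemma hat_out p m t : t <= t0 p m \/ t2 p m <= t -> hat p m t = 0.
Proof. intros H. pose proof (tord p m). unfold hat. destruct (Rle_dec t (t0 p m)); [reflexivity|].
  destruct (Rle_dec t (t1 p m)); [lra|]. destruct (Rle_dec t (t2 p m)); [|reflexivity].
  replace t with (t2 p m) by lra. ring. Qed.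

Lemma phi_hat p m t : (1 <= m)%nat -> 0 <= t -> phi p m t = hat p m t.
Proof. intros Hm Ht. unfold phi. apply Rint0_eq.
  pose proof (tord p m) as Ho. pose proof (t0_nonneg p m Hm) as H0. pose proof (t1_eq p m).
  destruct m as [|m]; [lia|]. set (P := 2^p).
  assert (I1 : is_RInt (chi p (S m)) 0 (t0 p (S m)) ((t0 p (S m) - 0) * 0)).
  { apply is_RInt_pc; auto. intros s Hs. unfold chi. destruct (Rle_dec (t0 p (S m)) s); [lra|reflexivity]. }
  assert (I2 : forall u, t0 p (S m) <= u <= t1 p (S m) ->
     is_RInt (chi p (S m)) (t0 p (S m)) u ((u - t0 p (S m)) * 2^p)).
  { intros u Hu. apply is_RInt_pc; try lra. intros s Hs. unfold chi.
    destruct (Rle_dec (t0 p (S m)) s); [|lra]. destruct (Rlt_dec s (t1 p (S m))); [reflexivity|lra]. }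
  assert (I3 : forall u, t1 p (S m) <= u <= t2 p (S m) ->
     is_RInt (chi p (S m)) (t1 p (S m)) u ((u - t1 p (S m)) * - 2^p)).
  { intros u Hu. apply is_RInt_pc; try lra. intros s Hs. unfold chi.
    destruct (Rle_dec (t0 p (S m)) s); [|lra]. destruct (Rlt_dec s (t1 p (S m))); [lra|].
    destruct (Rlt_dec s (t2 p (S m))); [reflexivity|lra]. }
  assert (I4 : forall u, t2 p (S m) <= u ->
     is_RInt (chi p (S m)) (t2 p (S m)) u ((u - t2 p (S m)) * 0)).
  { intros u Hu. apply is_RInt_pc; try lra. intros s Hs. unfold chi.
    destruct (Rle_dec (t0 p (S m)) s); [|lra]. destruct (Rlt_dec s (t1 p (S m))); [lra|].
    destruct (Rlt_dec s (t2 p (S m))); [lra|reflexivity]. }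
  destruct (Rle_dec t (t0 p (S m))).
  - rewrite hat_out by lra. eapply is_RInt_val; [|apply is_RInt_pc; [exact Ht|]].
    2:{ intros s Hs. unfold chi. destruct (Rle_dec (t0 p (S m)) s); [exfalso; lra|reflexivity]. }
    ring.
  - destruct (Rle_dec t (t1 p (S m))).
    + rewrite hat_left by lra. eapply is_RInt_val; [|apply (is_RInt_Chasles' _ _ _ _ _ _ I1 (I2 t ltac:(lra)))].
      ring.
    + pose proof (is_RInt_Chasles' _ _ _ _ _ _ I1 (I2 _ (conj (Rlt_le _ _ (proj1 Ho)) (Rle_refl _)))) as I12.
      destruct (Rle_dec t (t2 p (S m))).
      * rewrite hat_right by lra. eapply is_RInt_val; [|apply (is_RInt_Chasles' _ _ _ _ _ _ I12 (I3 t ltac:(lra)))].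
        rewrite H. field.
      * rewrite hat_out by lra.
        pose proof (is_RInt_Chasles' _ _ _ _ _ _ I12 (I3 _ (conj (Rlt_le _ _ (proj2 Ho)) (Rle_refl _)))) as I123.
        eapply is_RInt_val; [|apply (is_RInt_Chasles' _ _ _ _ _ _ I123 (I4 t ltac:(lra)))].
        rewrite H. field.
Qed.

Lemma phi00 t : 0 <= t -> phi 0 0 t = t.
Proof. intros Ht. unfold phi. apply Rint0_eq. eapply is_RInt_val; [|apply (is_RInt_pc _ 0 t 1 Ht)].
  ring. intros; reflexivity. Qed.

Lemma phiS0 p t : 0 <= t -> phi (S p) 0 t = 0.
Proof. intros Ht. unfold phi. apply Rint0_eq. eapply is_RInt_val; [|apply (is_RInt_pc _ 0 t 0 Ht)].
  ring. intros; reflexivity. Qed.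

Definition xg (p k : nat) : R := INR k / 2^p.

Lemma pw2_nz p : 2^p <> 0.
Proof. apply pow_nonzero; lra. Qed.

Lemma xg_S p k : xg p (S k) = xg p k + / 2^p.
Proof. unfold xg. rewrite S_INR. field. apply pw2_nz. Qed.
Lemma xg_dbl p k : xg (S p) (2*k) = xg p k.
Proof. unfold xg. rewrite mult_INR. simpl. field. apply pw2_nz. Qed.
Lemma xg_dbl1 p k : xg (S p) (2*k+1) = xg p k + / (2*2^p).
Proof. unfold xg. rewrite plus_INR, mult_INR. simpl. field. apply pw2_nz. Qed.
Lemma xg_dbl2 p k : xg (S p) (S (2*k+1)) = xg p k + / 2^p.
Proof. unfold xg. rewrite S_INR, plus_INR, mult_INR. simpl. field. apply pw2_nz. Qed.
Lemma t0_xg p k : t0 p (S k) = xg p k.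
Proof. unfold t0, xg. rewrite S_INR. field. apply pw2_nz. Qed.
Lemma t2_xg p k : t2 p (S k) = xg p k + / 2^p.
Proof. unfold t2, xg. rewrite S_INR. field. apply pw2_nz. Qed.
Lemma t1_xg p k : t1 p (S k) = xg p k + / (2*2^p).
Proof. unfold t1, xg. rewrite S_INR. simpl. field. apply pw2_nz. Qed.
Lemma xg_nonneg p k : 0 <= xg p k.
Proof. unfold xg. apply Rmult_le_pos; [apply pos_INR|left; apply Rinv_0_lt_compat, pw2_pos]. Qed.
Lemma xg_le p k l : (k <= l)%nat -> xg p k <= xg p l.
Proof. intros H. unfold xg. apply Rmult_le_compat_r; [left; apply Rinv_0_lt_compat, pw2_pos|apply le_INR; auto]. Qed.
Lemma xg_top p : xg p (2^p) = 1.
Proof. unfold xg. rewrite pow_INR. replace (INR 2) with 2 by (simpl; lra). field. apply pw2_nz. Qed.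
Lemma inv_pw2_pos p : 0 < / 2^p.
Proof. apply Rinv_0_lt_compat, pw2_pos. Qed.

Lemma Delta_loc (p : nat) (f : R -> R) (k : nat) (t : R) : (1 <= p)%nat -> (k < 2^p)%nat -> xg p k <= t <= xg p (S k) ->
  Delta f p t = coef f p (S k) * hat p (S k) t.
Proof. intros Hp Hk Ht. pose proof (xg_nonneg p k). unfold Delta.
  rewrite (rsum_single _ _ (S k)).
  - rewrite phi_hat by (lia || lra). reflexivity.
  - lia.
  - intros j Hj Hne. destruct j as [|j].
    + destruct p; [lia|]. simpl. ring.
    + rewrite phi_hat by (lia || lra). rewrite hat_out; [ring|].
      destruct (Compare_dec.le_lt_dec j k) as [Hjk|Hjk].
      * right. rewrite t2_xg, <- xg_S. apply Rle_trans with (xg p k); [apply xg_le; lia|lra].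
      * left. rewrite t0_xg. apply Rle_trans with (xg p (S k)); [lra|apply xg_le; lia].
Qed.

Lemma Spre_loc (f : R -> R) (p k : nat) (t : R) : (1 <= p)%nat -> (k < 2^p)%nat ->
  xg p k <= t <= xg p (S k) ->
  Spre f p t = f (xg p k) + (t - xg p k) * (2^p * (f (xg p (S k)) - f (xg p k))).
Proof.
  intros Hp. destruct p as [|p]; [lia|]. clear Hp. revert k t.
  induction p as [|p IH]; intros k t Hk Ht.
  - change (Spre f 1 t) with (f 0 + Delta f 0 t). unfold Delta. change (S (2^0)) with 2%nat. rewrite !rsum_S, rsum_0.
    assert (E0 : t0 0 1 = 0) by (unfold t0; simpl; field).
    assert (E1 : t1 0 1 = /2) by (unfold t1; simpl; field).
    assert (E2 : t2 0 1 = 1) by (unfold t2; simpl; field).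
    assert (X0 : xg 1 0 = 0) by (unfold xg; simpl; field).
    assert (X1 : xg 1 1 = /2) by (unfold xg; simpl; field).
    assert (X2 : xg 1 2 = 1) by (unfold xg; simpl; field).
    pose proof (xg_nonneg 1 k).
    rewrite phi00 by lra. rewrite phi_hat by (lia || lra).
    assert (k = 0 \/ k = 1)%nat as [->| ->] by (simpl in Hk; lia).
    + rewrite X0, X1 in *. rewrite hat_left by (rewrite E0, E1; lra). simpl coef. rewrite E0, E1, E2. simpl. ring.
    + rewrite X1, X2 in *. rewrite hat_right by (rewrite E1, E2; lra). simpl coef. rewrite E0, E1, E2. simpl. field.
  - destruct (Nat.Even_or_Odd k) as [[k0 ->]|[k0 ->]].
    + assert (Hk0 : (k0 < 2^(S p))%nat) by (rewrite Nat.pow_succ_r' in Hk; lia).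
      rewrite xg_dbl in *. rewrite <- (Nat.add_1_r (2*k0)) in *. rewrite xg_dbl1 in *.
      assert (Ht' : xg (S p) k0 <= t <= xg (S p) (S k0)).
      { rewrite xg_S. pose proof (pw2_pos (S p)). assert (/(2*2^S p) <= /2^S p).
        { apply Rinv_le_contravar; [apply pw2_pos|lra]. } lra. }
      change (Spre f (S (S p)) t) with (Spre f (S p) t + Delta f (S p) t).
      rewrite (IH k0 t Hk0 Ht'). rewrite (Delta_loc _ _ k0) by lia || lra.
      rewrite hat_left by (rewrite t0_xg, t1_xg; lra).
      unfold coef. rewrite t0_xg, t1_xg, t2_xg. rewrite xg_S. simpl (2 ^ S (S p)). simpl (2 ^ S p).
      field.
    + assert (Hk0 : (k0 < 2^(S p))%nat) by (rewrite Nat.pow_succ_r' in Hk; lia).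
      rewrite xg_dbl1, xg_dbl2 in *.
      assert (Ht' : xg (S p) k0 <= t <= xg (S p) (S k0)).
      { rewrite xg_S. pose proof (pw2_pos (S p)). assert (0 < /(2*2^S p)).
        { apply Rinv_0_lt_compat. lra. } lra. }
      change (Spre f (S (S p)) t) with (Spre f (S p) t + Delta f (S p) t).
      rewrite (IH k0 t Hk0 Ht'). rewrite (Delta_loc _ _ k0) by lia || lra.
      rewrite hat_right by (rewrite t1_xg, t2_xg; rewrite xg_S in Ht'; lra).
      unfold coef. rewrite t0_xg, t1_xg, t2_xg. rewrite xg_S. simpl (2 ^ S (S p)). simpl (2 ^ S p).
      field. apply pw2_nz.
Qed.

Lemma deriv_eq (g : R -> R) s l : derivable_pt_lim g s l -> deriv g s = l.
Proof. intros H. unfold deriv.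
  assert (Hex : exists l, derivable_pt_lim g s l) by eauto.
  pose proof (epsilon_spec (inhabits 0) _ Hex) as H2.
  eapply uniqueness_limite; eauto. Qed.

Lemma deriv_affine_loc (g : R -> R) s a b A B : a < s < b ->
  (forall t, a <= t <= b -> g t = A + (t - a) * B) -> deriv g s = B.
Proof. intros Hs H. apply deriv_eq. apply is_derive_Reals.
  apply (is_derive_ext_loc (fun t => A + (t - a) * B)).
  - apply (locally_interval _ s a b); simpl; try lra. intros y Hy1 Hy2. symmetry. apply H. simpl in *; lra.
  - auto_derive; auto. ring. Qed.

Lemma deriv_Spre (f : R -> R) p k s : (1 <= p)%nat -> (k < 2^p)%nat ->
  xg p k < s < xg p (S k) ->
  deriv (Spre f p) s = 2^p * (f (xg p (S k)) - f (xg p k)).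
Proof. intros Hp Hk Hs. eapply deriv_affine_loc; [exact Hs|].
  intros t Ht. apply Spre_loc; auto. Qed.

Lemma deriv_Spre0 (f : R -> R) s : deriv (Spre f 0) s = 0.
Proof. apply deriv_eq. simpl. apply derivable_pt_lim_const. Qed.

Section PW.
Variables (N : nat) (P : R) (HP : 0 < P) (g : R -> R) (h F : nat -> R -> R).
Hypothesis Hg : forall k s, (k < N)%nat -> INR k / P < s < INR (S k) / P -> g s = h k s.
Hypothesis HF : forall k s, (k < N)%nat -> INR k / P <= s <= INR (S k) / P ->
  is_derive (F k) s (h k s) /\ continuous (h k) s.

Fixpoint Vpw (k : nat) : R := match k with O => 0
  | S k' => Vpw k' + (F k' (INR k / P) - F k' (INR k' / P)) end.

Lemma grid_mono k : INR k / P <= INR (S k) / P.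
Proof. unfold Rdiv. apply Rmult_le_compat_r; [left; apply Rinv_0_lt_compat; auto|]. rewrite S_INR; lra. Qed.

Lemma pw_piece k t : (k < N)%nat -> INR k / P <= t <= INR (S k) / P ->
  is_RInt g (INR k / P) t (F k t - F k (INR k / P)).
Proof. intros Hk Ht. apply (is_RInt_ext (h k)).
  - intros x; rewrite Rmin_left, Rmax_right by lra. intros Hx. symmetry. apply Hg; auto. lra.
  - apply (is_RInt_derive (F k) (h k)).
    + intros x; rewrite Rmin_left, Rmax_right by lra. intros Hx. apply HF; auto. lra.
    + intros x; rewrite Rmin_left, Rmax_right by lra. intros Hx. apply HF; auto. lra. Qed.

Lemma pw_int k t : (k < N)%nat -> INR k / P <= t <= INR (S k) / P ->
  is_RInt g 0 t (Vpw k + (F k t - F k (INR k / P))).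
Proof. revert t. induction k; intros t Hk Ht.
  - pose proof (pw_piece 0 t Hk Ht) as Hpc.
    assert (E : INR 0 / P = 0) by (simpl; unfold Rdiv; ring). rewrite E in *.
    simpl Vpw. rewrite Rplus_0_l. exact Hpc.
  - eapply is_RInt_Chasles'; [|apply pw_piece; auto].
    cbn [Vpw]. apply IHk; [lia|]. split; [apply grid_mono|lra]. Qed.
End PW.

Lemma pw_Rint0 N P (HP : 0 < P) g h F :
  (forall k s, (k < N)%nat -> INR k / P < s < INR (S k) / P -> g s = h k s) ->
  (forall k s, (k < N)%nat -> INR k / P <= s <= INR (S k) / P ->
     is_derive (F k) s (h k s) /\ continuous (h k) s) ->
  forall k t, (k < N)%nat -> INR k / P <= t <= INR (S k) / P ->
  Rint0 g t = Rint0 g (INR k / P) + (F k t - F k (INR k / P)).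
Proof. intros Hg HF k t Hk Ht.
  rewrite (Rint0_eq _ _ _ (pw_int N P HP g h F Hg HF k t Hk Ht)).
  rewrite (Rint0_eq _ _ _ (pw_int N P HP g h F Hg HF k (INR k / P) Hk ltac:(pose proof (grid_mono P HP k); lra))).
  ring. Qed.

Definition hatl (p k' : nat) (s : R) : R :=
  if Nat.even k' then 2^p*(s - xg (S p) k') else 2^p*(xg (S p) (S k') - s).
Definition Fp (p k' : nat) (s : R) : R :=
  if Nat.even k' then 2^p/2*(s - xg (S p) k')^2 else -(2^p/2)*(xg (S p) (S k') - s)^2.

Lemma Fp_deriv p k' s : is_derive (Fp p k') s (hatl p k' s).
Proof. unfold Fp, hatl. destruct (Nat.even k'); auto_derive; auto; field. Qed.

Lemma hatl_cont p k' (c : R) s : continuous (fun s => c * hatl p k' s) s.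
Proof. apply (@ex_derive_continuous R_AbsRing R_NormedModule). unfold hatl. destruct (Nat.even k'); auto_derive; auto. Qed.

Lemma piece_split p k' : (k' < 2^(S p))%nat ->
  (Nat.div2 k' < 2^p)%nat /\
  ((Nat.even k' = true /\ xg (S p) k' = xg p (Nat.div2 k') /\ xg (S p) (S k') = t1 p (S (Nat.div2 k'))) \/
   (Nat.even k' = false /\ xg (S p) k' = t1 p (S (Nat.div2 k')) /\ xg (S p) (S k') = xg p (S (Nat.div2 k')))).
Proof. intros Hk. destruct (Nat.Even_or_Odd k') as [[k ->]|[k ->]].
  - rewrite Nat.div2_double, Nat.even_even. split; [rewrite Nat.pow_succ_r' in Hk; lia|].
    left. rewrite xg_dbl, t1_xg, <- xg_dbl1. repeat split. f_equal; lia.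
  - rewrite Nat.div2_odd', Nat.even_odd. split; [rewrite Nat.pow_succ_r' in Hk; lia|].
    right. rewrite xg_dbl1, t1_xg. repeat split. replace (S (2*k+1)) with (S (2*k+1)) by lia.
    rewrite xg_dbl2, xg_S. reflexivity. Qed.

Lemma piece_in p k' s : (k' < 2^(S p))%nat -> xg (S p) k' <= s <= xg (S p) (S k') ->
  xg p (Nat.div2 k') <= s <= xg p (S (Nat.div2 k')) /\ hat p (S (Nat.div2 k')) s = hatl p k' s.
Proof. intros Hk Hs. pose proof (tord p (S (Nat.div2 k'))) as Ho.
  rewrite t0_xg, t2_xg, <- xg_S in Ho.
  destruct (piece_split p k' Hk) as [_ [[He [E1 E2]]|[He [E1 E2]]]]; rewrite E1, E2 in Hs; unfold hatl; rewrite He.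
  - split; [lra|]. rewrite hat_left by (rewrite t0_xg; lra). rewrite t0_xg, E1. reflexivity.
  - split; [lra|]. rewrite hat_right by (rewrite t2_xg, <- xg_S; lra). rewrite t2_xg, <- xg_S, E2. reflexivity.
Qed.

Lemma piece_open p k' s : (k' < 2^(S p))%nat -> xg (S p) k' < s < xg (S p) (S k') ->
  xg p (Nat.div2 k') < s < xg p (S (Nat.div2 k')).
Proof. intros Hk Hs. pose proof (tord p (S (Nat.div2 k'))) as Ho.
  rewrite t0_xg, t2_xg, <- xg_S in Ho.
  destruct (piece_split p k' Hk) as [_ [[He [E1 E2]]|[He [E1 E2]]]]; rewrite E1, E2 in Hs; lra. Qed.

Definition sig (f : R -> R) (p k : nat) : R := 2^p * (f (xg p (S k)) - f (xg p k)).

Section Levy.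
Variables (d : nat) (v : R -> nat -> nat -> R) (w : R -> nat -> R) (i : nat).

Definition g1 (p : nat) := fun s => rsum d (fun j =>
           Delta (fun u => v u i j) p s * deriv (Spre (fun u => w u j) p) s).
Definition g2 (p : nat) := fun s => rsum d (fun j =>
           deriv (Spre (fun u => v u i j) p) s * Delta (fun u => w u j) p s).
Definition Q1 p k := rsum d (fun j => coef (fun u => v u i j) p (S k) * sig (fun u => w u j) p k).
Definition Q2 p k := rsum d (fun j => sig (fun u => v u i j) p k * coef (fun u => w u j) p (S k)).

Lemma levy_g p t : levy_term d v w p t i = Rint0 (g1 p) t - Rint0 (g2 p) t.
Proof. reflexivity. Qed.

Lemma g1_loc p k s : (1 <= p)%nat -> (k < 2^p)%nat -> xg p k < s < xg p (S k) ->
  g1 p s = Q1 p k * hat p (S k) s.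
Proof. intros Hp Hk Hs. unfold g1, Q1. rewrite <- rsum_scal. apply rsum_ext. intros j Hj.
  rewrite (Delta_loc _ _ k) by (auto || lra). rewrite (deriv_Spre _ _ k) by auto. unfold sig. ring. Qed.

Lemma g2_loc p k s : (1 <= p)%nat -> (k < 2^p)%nat -> xg p k < s < xg p (S k) ->
  g2 p s = Q2 p k * hat p (S k) s.
Proof. intros Hp Hk Hs. unfold g2, Q2. rewrite <- rsum_scal. apply rsum_ext. intros j Hj.
  rewrite (Delta_loc _ _ k) by (auto || lra). rewrite (deriv_Spre _ _ k) by auto. unfold sig. ring. Qed.

Lemma gX_Rint0 (g : R -> R) (Q : nat -> R) p : (1 <= p)%nat ->
  (forall k s, (k < 2^p)%nat -> xg p k < s < xg p (S k) -> g s = Q k * hat p (S k) s) ->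
  forall k' t, (k' < 2^(S p))%nat -> xg (S p) k' <= t <= xg (S p) (S k') ->
  Rint0 g t = Rint0 g (xg (S p) k') + Q (Nat.div2 k') * (Fp p k' t - Fp p k' (xg (S p) k')).
Proof. intros Hp Hg k' t Hk Ht.
  pose proof (pw_Rint0 (2^(S p)) (2^(S p)) (pw2_pos _) g
     (fun k s => Q (Nat.div2 k) * hatl p k s) (fun k s => Q (Nat.div2 k) * Fp p k s)) as H.
  assert (H1 : forall k s, (k < 2^(S p))%nat -> INR k / 2^(S p) < s < INR (S k) / 2^(S p) ->
     g s = Q (Nat.div2 k) * hatl p k s).
  { intros k s Hk1 Hs. rewrite (Hg (Nat.div2 k) s).
    + f_equal. apply piece_in; auto; unfold xg; lra.
    + apply piece_split; auto.
    + apply piece_open; auto. }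
  specialize (H H1). match type of H with ?A -> _ => assert (H2 : A) end.
  { intros k s Hk1 Hs. split.
    + apply (is_derive_scal (Fp p k) s (Q (Nat.div2 k))). apply Fp_deriv.
    + apply hatl_cont. }
  unfold xg in *. rewrite (H H2 k' t Hk Ht). ring.
Qed.
End Levy.

Definition PS p (T : R -> R) (Q : nat -> R) := T 0 = 0 /\
  forall k' t, (k' < 2^(S p))%nat -> xg (S p) k' <= t <= xg (S p) (S k') ->
  T t = T (xg (S p) k') + Q (Nat.div2 k') * (Fp p k' t - Fp p k' (xg (S p) k')).

Lemma Rint0_0 g : Rint0 g 0 = 0.
Proof. apply Rint0_eq. apply (is_RInt_point g 0). Qed.

Lemma Rint0_zero (g : R -> R) t : (forall s, g s = 0) -> Rint0 g t = 0.
Proof. intros H. apply Rint0_eq. apply (is_RInt_ext (fun _ => 0)). intros; auto.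
  eapply is_RInt_val; [|apply is_RInt_const]. cbn. unfold scal; simpl. unfold mult; simpl. ring. Qed.

Lemma levy_PS d v w i p : (1 <= p)%nat ->
  PS p (fun t => levy_term d v w p t i) (fun k => Q1 d v w i p k - Q2 d v w i p k).
Proof. intros Hp. split.
  - rewrite levy_g, !Rint0_0. ring.
  - intros k' t Hk Ht. rewrite !levy_g.
    rewrite (gX_Rint0 (g1 d v w i p) (Q1 d v w i p) p Hp) with (k' := k') by (auto; intros; apply g1_loc; auto).
    rewrite (gX_Rint0 (g2 d v w i p) (Q2 d v w i p) p Hp) with (k' := k') by (auto; intros; apply g2_loc; auto).
    ring. Qed.

Lemma levy_zero d v w i t : levy_term d v w 0 t i = 0.
Proof. rewrite levy_g, !Rint0_zero; [ring| |]; intros s.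
  - unfold g2. apply rsum_zero. intros j _. rewrite deriv_Spre0. ring.
  - unfold g1. apply rsum_zero. intros j _. rewrite deriv_Spre0. ring. Qed.

Lemma levy_PS0 d v w i : PS 0 (fun t => levy_term d v w 0 t i) (fun _ => 0).
Proof. split; [apply levy_zero|]. intros. rewrite !levy_zero. ring. Qed.

Lemma sq_diff_bound e u z del : 0 <= u <= del -> 0 <= z <= del ->
  Rabs (e * u^2 - e * z^2) <= Rabs e * (2 * del) * Rabs (u - z).
Proof. intros Hu Hz. replace (e*u^2 - e*z^2) with (e * (u + z) * (u - z)) by ring.
  rewrite !Rabs_mult. apply Rmult_le_compat_r; [apply Rabs_pos|]. apply Rmult_le_compat_l; [apply Rabs_pos|].
  rewrite Rabs_right by lra. lra. Qed.

Lemma Fp_lip p k' s t : xg (S p) k' <= s <= xg (S p) (S k') -> xg (S p) k' <= t <= xg (S p) (S k') ->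
  Rabs (Fp p k' t - Fp p k' s) <= /2 * Rabs (t - s).
Proof. intros Hs Ht. pose proof (xg_S (S p) k') as E. pose proof (pw2_pos p) as P.
  assert (Hd : 2^p/2 * (2 * /2^(S p)) = /2) by (simpl; field; lra).
  assert (He : Rabs (2^p/2) = 2^p/2) by (apply Rabs_right; lra).
  assert (He' : Rabs (-(2^p/2)) = 2^p/2) by (rewrite Rabs_Ropp; auto).
  unfold Fp. destruct (Nat.even k').
  - eapply Rle_trans; [apply (sq_diff_bound _ _ _ (/2^(S p))); lra|].
    rewrite He, Hd. right. f_equal. f_equal. ring.
  - eapply Rle_trans; [apply (sq_diff_bound _ _ _ (/2^(S p))); lra|].
    rewrite He', Hd. right. f_equal. rewrite <- Rabs_Ropp. f_equal. ring. Qed.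

Section Abs.
Variables (p : nat) (T : R -> R) (Q : nat -> R) (Bd : R).
Hypothesis HPS : PS p T Q.
Hypothesis HQ : forall k, (k < 2^p)%nat -> Rabs (Q k) <= Bd.

Lemma piece_lip k' s t : (k' < 2^(S p))%nat -> xg (S p) k' <= s <= xg (S p) (S k') ->
  xg (S p) k' <= t <= xg (S p) (S k') -> Rabs (T t - T s) <= Bd/2 * Rabs (t - s).
Proof. intros Hk Hs Ht. destruct HPS as [_ H]. rewrite (H k' t), (H k' s) by auto.
  replace (T (xg (S p) k') + Q (Nat.div2 k') * (Fp p k' t - Fp p k' (xg (S p) k')) -
    (T (xg (S p) k') + Q (Nat.div2 k') * (Fp p k' s - Fp p k' (xg (S p) k'))))
    with (Q (Nat.div2 k') * (Fp p k' t - Fp p k' s)) by ring.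
  rewrite Rabs_mult. replace (Bd/2 * Rabs (t - s)) with (Bd * (/2 * Rabs (t - s))) by field.
  apply Rmult_le_compat; try apply Rabs_pos.
  - apply HQ. apply (proj1 (piece_split p k' Hk)).
  - apply Fp_lip; auto. Qed.
End Abs.

Lemma grid_lip q (T : R -> R) M : 0 <= M ->
  (forall k s t, (k < 2^q)%nat -> xg q k <= s <= xg q (S k) -> xg q k <= t <= xg q (S k) ->
     Rabs (T t - T s) <= M * Rabs (t - s)) ->
  forall s t, 0 <= s <= 1 -> 0 <= t <= 1 -> Rabs (T t - T s) <= M * Rabs (t - s).
Proof. intros HM H.
  assert (K : forall k, (k <= 2^q)%nat -> forall s t, 0 <= s <= t -> t <= xg q k ->
     Rabs (T t - T s) <= M * (t - s)).
  { induction k; intros Hk s t Hst Htk.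
    - unfold xg in Htk. simpl in Htk. unfold Rdiv in Htk. rewrite Rmult_0_l in Htk.
      replace t with s by lra. rewrite Rminus_diag, Rabs_R0. lra.
    - destruct (Rle_dec t (xg q k)) as [Ht|Ht]; [apply IHk; auto; lia|].
      destruct (Rle_dec (xg q k) s) as [Hs|Hs].
      + rewrite <- (Rabs_right (t - s)) by lra. apply (H k); [lia|lra|lra].
      + replace (T t - T s) with ((T t - T (xg q k)) + (T (xg q k) - T s)) by ring.
        eapply Rle_trans; [apply Rabs_triang|].
        replace (M * (t - s)) with (M * Rabs (t - xg q k) + M * (xg q k - s))
          by (rewrite Rabs_right by lra; ring).
        apply Rplus_le_compat.
        * apply (H k); [lia| |lra]. split; [lra|]. pose proof (xg_le q k (S k) ltac:(lia)). lra.
        * apply IHk; [lia|lra|lra]. }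
  intros s t Hs Ht. pose proof (xg_top q) as Top.
  destruct (Rle_dec s t).
  - rewrite (Rabs_right (t - s)) by lra. apply (K (2^q)%nat); auto; lra.
  - rewrite <- Rabs_Ropp, Ropp_minus_distr, <- (Rabs_Ropp (t - s)), Ropp_minus_distr.
    rewrite (Rabs_right (s - t)) by lra. apply (K (2^q)%nat); auto; lra. Qed.

Lemma t2_le1 r m : (m <= 2^r)%nat -> t2 r m <= 1.
Proof. intros H. unfold t2. rewrite <- (xg_top r). apply xg_le; auto. Qed.

Lemma t_spacing r m : t1 r m = t0 r m + / 2^(S r) /\ t2 r m = t1 r m + / 2^(S r).
Proof. pose proof (t1_eq r m). pose proof (t02 r m). pose proof (pw2_pos r). simpl.
  split; rewrite H; rewrite H0; field; lra. Qed.

Lemma contain p r m : (S p <= r)%nat -> (1 <= m <= 2^r)%nat ->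
  exists k', (k' < 2^(S p))%nat /\ xg (S p) k' <= t0 r m /\ t2 r m <= xg (S p) (S k').
Proof. intros Hr Hm. set (e := (r - S p)%nat). set (q := (2^e)%nat).
  assert (Hq : (q <> 0)%nat) by (apply Nat.pow_nonzero; lia).
  assert (Er : (2^r = 2^(S p) * q)%nat) by (unfold q, e; rewrite <- Nat.pow_add_r; f_equal; lia).
  pose proof (Nat.div_mod (m - 1) q Hq) as Dm. pose proof (Nat.mod_upper_bound (m-1) q Hq) as Mb.
  set (k' := ((m - 1) / q)%nat) in *. set (rm := ((m-1) mod q)%nat) in *.
  exists k'.
  assert (Hk : (k' < 2^(S p))%nat).
  { destruct (Nat.lt_ge_cases k' (2^(S p))) as [|Hc]; auto. exfalso.
    assert (q * 2^(S p) <= q * k')%nat by (apply Nat.mul_le_mono_l; auto). lia. }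
  split; auto.
  assert (Rr : 2^r = 2^(S p) * INR q).
  { replace (2^r) with (INR (2^r)). rewrite Er, mult_INR, !pow_INR. replace (INR 2) with 2 by (simpl; lra). reflexivity.
    rewrite pow_INR. replace (INR 2) with 2 by (simpl; lra). reflexivity. }
  assert (Pq : 0 < INR q) by (apply lt_0_INR; lia).
  pose proof (pw2_pos (S p)) as P.
  unfold t0, t2, xg. rewrite Rr.
  assert (Im : INR m - 1 = INR k' * INR q + INR rm).
  { rewrite <- mult_INR, <- plus_INR. rewrite (Nat.mul_comm k' q), <- Dm. rewrite minus_INR by lia. simpl. ring. }
  assert (Irm : INR rm + 1 <= INR q) by (rewrite <- S_INR; apply le_INR; lia).
  assert (Irm0 : 0 <= INR rm) by apply pos_INR.
  rewrite S_INR. unfold Rdiv.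
  assert (Hi : 0 <= / (2^(S p) * INR q)) by (left; apply Rinv_0_lt_compat, Rmult_lt_0_compat; lra).
  split.
  - replace (INR k' * / 2^(S p)) with (INR k' * INR q * / (2^(S p) * INR q)) by (field; lra).
    apply Rmult_le_compat_r; auto. nra.
  - replace ((INR k' + 1) * / 2^(S p)) with ((INR k' + 1) * INR q * / (2^(S p) * INR q)) by (field; lra).
    apply Rmult_le_compat_r; auto. nra.
Qed.

Section Abs2.
Variables (p : nat) (T : R -> R) (Q : nat -> R) (Bd : R).
Hypothesis HPS : PS p T Q.
Hypothesis HQ : forall k, (k < 2^p)%nat -> Rabs (Q k) <= Bd.
Hypothesis HB : 0 <= Bd.

Lemma T_lip s t : 0 <= s <= 1 -> 0 <= t <= 1 -> Rabs (T t - T s) <= Bd/2 * Rabs (t - s).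
Proof. apply (grid_lip (S p)); [lra|]. intros k s' t' Hk Hs Ht. apply (piece_lip p T Q Bd HPS HQ k); auto. Qed.

Lemma T_bound t : 0 <= t <= 1 -> Rabs (T t) <= Bd/2.
Proof. intros Ht. destruct HPS as [H0 _]. replace (T t) with (T t - T 0) by (rewrite H0; ring).
  eapply Rle_trans; [apply T_lip; lra|]. rewrite Rminus_0_r, Rabs_right by lra. nra. Qed.

Lemma T_coef_any r m : (1 <= m <= 2^r)%nat ->
  Rabs (2 * T (t1 r m) - T (t0 r m) - T (t2 r m)) <= Bd/2 * / 2^r.
Proof. intros Hm. pose proof (t0_nonneg r m ltac:(lia)). pose proof (t2_le1 r m ltac:(lia)).
  destruct (t_spacing r m) as [E1 E2]. pose proof (inv_pw2_pos (S r)).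
  replace (2 * T (t1 r m) - T (t0 r m) - T (t2 r m)) with ((T (t1 r m) - T (t0 r m)) + (T (t1 r m) - T (t2 r m))) by ring.
  eapply Rle_trans; [apply Rabs_triang|].
  eapply Rle_trans; [apply Rplus_le_compat; apply T_lip; lra|].
  rewrite E1 in *. rewrite E2. replace (t0 r m + / 2 ^ S r - t0 r m) with (/2^(S r)) by ring.
  replace (t0 r m + / 2 ^ S r - (t0 r m + / 2 ^ S r + / 2 ^ S r)) with (-/2^(S r)) by ring.
  rewrite Rabs_Ropp, Rabs_right by lra. simpl. right. field. apply pw2_nz. Qed.

Lemma T_coef_fine r m : (S p <= r)%nat -> (1 <= m <= 2^r)%nat ->
  Rabs (2 * T (t1 r m) - T (t0 r m) - T (t2 r m)) <= Bd * 2^p * (/ 2^(S r))^2.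
Proof. intros Hr Hm. destruct (contain p r m Hr Hm) as [k' [Hk [H0 H2]]].
  destruct (t_spacing r m) as [E1 E2]. pose proof (inv_pw2_pos (S r)).
  destruct HPS as [_ HH]. rewrite (HH k' (t0 r m)), (HH k' (t1 r m)), (HH k' (t2 r m)) by (auto; lra).
  set (h := / 2^(S r)) in *. set (a := xg (S p) k') in *.
  replace (2 * (T a + Q (Nat.div2 k') * (Fp p k' (t1 r m) - Fp p k' a)) -
    (T a + Q (Nat.div2 k') * (Fp p k' (t0 r m) - Fp p k' a)) -
    (T a + Q (Nat.div2 k') * (Fp p k' (t2 r m) - Fp p k' a)))
   with (Q (Nat.div2 k') * (2 * Fp p k' (t1 r m) - Fp p k' (t0 r m) - Fp p k' (t2 r m))) by ring.
  assert (Hs : Rabs (2 * Fp p k' (t1 r m) - Fp p k' (t0 r m) - Fp p k' (t2 r m)) = 2^p * h^2).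
  { rewrite E2, E1. pose proof (pw2_pos p). unfold Fp. destruct (Nat.even k').
    - match goal with |- Rabs ?X = _ => replace X with (-(2^p*h^2)) by field end.
      rewrite Rabs_Ropp, Rabs_right; [reflexivity|]. apply Rle_ge, Rmult_le_pos; [lra|]. apply pow2_ge_0.
    - match goal with |- Rabs ?X = _ => replace X with (2^p*h^2) by field end.
      rewrite Rabs_right; [reflexivity|]. apply Rle_ge, Rmult_le_pos; [lra|]. apply pow2_ge_0. }
  rewrite Rabs_mult, Hs. rewrite Rmult_assoc. apply Rmult_le_compat_r.
  - apply Rmult_le_pos; [left; apply pw2_pos|apply pow2_ge_0].
  - apply HQ. apply (proj1 (piece_split p k' Hk)). Qed.

Lemma T_01 : Rabs (T 1 - T 0) <= Bd/2.
Proof. eapply Rle_trans; [apply T_lip; lra|]. rewrite Rminus_0_r, Rabs_R1. lra. Qed.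
End Abs2.

Lemma sig_even (f : R -> R) p k : sig f (S p) (2*k) = sig f p k + 2^p * coef f p (S k).
Proof. unfold sig, coef. replace (S (2*k)) with (2*k+1)%nat by lia.
  rewrite xg_dbl1, xg_dbl, t0_xg, t1_xg, t2_xg, xg_S. simpl. ring. Qed.

Lemma sig_odd (f : R -> R) p k : sig f (S p) (2*k+1) = sig f p k - 2^p * coef f p (S k).
Proof. unfold sig, coef. rewrite xg_dbl1, xg_dbl2, t0_xg, t1_xg, t2_xg, xg_S. simpl. ring. Qed.

Lemma pow_div_eq a p : 0 < a -> 2^p / a^p = (2/a)^p.
Proof. intros Ha. unfold Rdiv. rewrite Rpow_mult_distr, pow_inv. reflexivity. Qed.

Lemma sig_bound (d : nat) (f : nat -> R -> R) (K a : R) : 1 < a < 2 -> 0 <= K ->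
  rsum d (fun j => Rabs (f j 1 - f j 0)) <= K ->
  (forall q m, (1 <= m <= 2^q)%nat -> rsum d (fun j => Rabs (coef (f j) q m)) <= K / a^q) ->
  forall p k, (k < 2^p)%nat -> rsum d (fun j => Rabs (sig (f j) p k)) <= K * (2/a)^p / (2/a - 1).
Proof. intros Ha HK H0 Hc.
  assert (Hr : 1 < 2/a < 2). { split; apply (Rmult_lt_reg_r a); try lra; unfold Rdiv; rewrite Rmult_assoc, Rinv_l; lra. }
  induction p; intros k Hk.
  - simpl in Hk. assert (k = 0)%nat as -> by lia.
    eapply Rle_trans; [|apply (Rle_trans _ K)]; [| |].
    + right. apply rsum_ext. intros j _. unfold sig.
      assert (X1 : xg 0 1 = 1) by (unfold xg; simpl; field). assert (X0 : xg 0 0 = 0) by (unfold xg; simpl; field).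
      rewrite X1, X0, pow_O, Rmult_1_l. reflexivity.
    + auto.
    + simpl. unfold Rdiv. rewrite Rmult_1_r. apply Rle_trans with (K * 1); [lra|].
      apply Rmult_le_compat_l; auto. rewrite <- Rinv_1. apply Rinv_le_contravar; lra.
  - assert (Hc' : forall k, (k < 2^p)%nat -> rsum d (fun j => Rabs (2^p * coef (f j) p (S k))) <= K * (2/a)^p).
    { intros k0 Hk0. rewrite <- (pow_div_eq a p) by lra.
      replace (K * (2^p/a^p)) with ((K / a^p) * 2^p) by (field; apply pow_nonzero; lra).
      eapply Rle_trans; [|apply Rmult_le_compat_r; [left; apply pw2_pos|apply (Hc p (S k0)); lia]].
      rewrite <- rsum_scal. right. apply rsum_ext. intros j _. rewrite Rabs_mult, Rabs_right by (left; apply pw2_pos). ring. }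
    assert (Hkk : (Nat.div2 k < 2^p)%nat) by (rewrite Nat.pow_succ_r' in Hk; destruct (Nat.Even_or_Odd k) as [[k0 ->]|[k0 ->]];
        [rewrite Nat.div2_double|rewrite Nat.div2_odd']; lia).
    assert (E : forall j, Rabs (sig (f j) (S p) k) <= Rabs (sig (f j) p (Nat.div2 k)) + Rabs (2^p * coef (f j) p (S (Nat.div2 k)))).
    { intros j. destruct (Nat.Even_or_Odd k) as [[k0 ->]|[k0 ->]].
      - rewrite Nat.div2_double, sig_even. apply Rabs_triang.
      - rewrite Nat.div2_odd', sig_odd. unfold Rminus. rewrite <- (Rabs_Ropp (2^p * _)). apply Rabs_triang. }
    eapply Rle_trans; [apply rsum_mono; intros j _; apply E|]. rewrite rsum_plus.
    eapply Rle_trans; [apply Rplus_le_compat; [apply IHp; auto|apply Hc'; auto]|].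
    right. simpl. field. lra. Qed.

Section Ser.
Variables (a : nat -> R) (c th : R).
Hypothesis Hc : 0 <= c.
Hypothesis Hth : 0 <= th < 1.
Hypothesis Ha : forall p, Rabs (a p) <= c * th^p.

Lemma tail_bound N j : Rabs (rsum (N + j) a - rsum N a) <= c * th^N * (1 - th^j) / (1 - th).
Proof. induction j.
  - rewrite Nat.add_0_r, Rminus_diag, Rabs_R0. simpl. right. field. lra.
  - rewrite Nat.add_succ_r, rsum_S.
    replace (rsum (N + j) a + a (N + j)%nat - rsum N a) with ((rsum (N + j) a - rsum N a) + a (N+j)%nat) by ring.
    eapply Rle_trans; [apply Rabs_triang|]. eapply Rle_trans; [apply Rplus_le_compat; [apply IHj|apply Ha]|].
    rewrite pow_add. right. simpl. field. lra. Qed.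

Lemma tail_bound' N M : (N <= M)%nat -> Rabs (rsum M a - rsum N a) <= c * th^N / (1 - th).
Proof. intros H. replace M with (N + (M - N))%nat by lia. eapply Rle_trans; [apply tail_bound|].
  unfold Rdiv. rewrite !Rmult_assoc. apply Rmult_le_compat_l; auto. apply Rmult_le_compat_l; [apply pow_le; lra|].
  pose proof (Rinv_0_lt_compat (1 - th) ltac:(lra)). pose proof (pow_le th (M - N) ltac:(lra)). nra. Qed.

Lemma cvg_exists : exists l, Un_cv (fun N => rsum N a) l.
Proof. assert (Cc : Cauchy_crit (fun N => rsum N a)).
  { intros eps He. destruct (pow_lt_1_zero th ltac:(rewrite Rabs_right; lra) (eps * (1 - th) / (2*(c + 1))))
      as [N0 HN0]. { apply Rdiv_lt_0_compat; [apply Rmult_lt_0_compat|]; lra. }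
    exists N0. intros n m Hn Hm.
    assert (Hb : forall M, (N0 <= M)%nat -> Rabs (rsum M a - rsum N0 a) <= eps * (1 - th) / (2*(c + 1)) * c / (1 - th) ).
    { intros M HM. eapply Rle_trans; [apply tail_bound'; auto|].
      specialize (HN0 N0 (le_n _)). rewrite Rabs_right in HN0 by (apply Rle_ge, pow_le; lra).
      revert HN0. generalize (eps * (1 - th) / (2*(c + 1))). intros X HX.
      unfold Rdiv. apply Rmult_le_compat_r; [left; apply Rinv_0_lt_compat; lra|]. rewrite (Rmult_comm X c). apply Rmult_le_compat_l; lra. }
    assert (Hx : eps * (1 - th) / (2*(c + 1)) * c / (1 - th) < eps / 2).
    { replace (eps * (1 - th) / (2*(c + 1)) * c / (1 - th)) with (eps * (c / (c+1)) / 2) by (field; lra).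
      assert (c/(c+1) < 1). { apply (Rmult_lt_reg_r (c+1)); [lra|]. unfold Rdiv. rewrite Rmult_assoc, Rinv_l; lra. }
      nra. }
    unfold Rdist. replace (rsum n a - rsum m a) with ((rsum n a - rsum N0 a) - (rsum m a - rsum N0 a)) by ring.
    eapply Rle_lt_trans; [apply Rabs_triang|]. rewrite Rabs_Ropp.
    pose proof (Hb n Hn). pose proof (Hb m Hm). lra. }
  destruct (Rcomplete.R_complete _ Cc) as [l Hl]. eauto. Qed.

Lemma cvg_rate l : Un_cv (fun N => rsum N a) l -> forall N, Rabs (rsum N a - l) <= c * th^N / (1 - th).
Proof. intros Hl N. apply Rnot_lt_le. intros Hlt.
  destruct (Hl (Rabs (rsum N a - l) - c * th^N / (1 - th)) ltac:(lra)) as [M HM].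
  specialize (HM (Nat.max M N) (Nat.le_max_l _ _)).
  unfold Rdist in HM. pose proof (tail_bound' N (Nat.max M N) (Nat.le_max_r _ _)) as Ht.
  pose proof (Rabs_triang (rsum N a - rsum (Nat.max M N) a) (rsum (Nat.max M N) a - l)) as Tr.
  replace (rsum N a - rsum (Nat.max M N) a + (rsum (Nat.max M N) a - l)) with (rsum N a - l) in Tr by ring.
  rewrite (Rabs_minus_sym (rsum N a) (rsum (Nat.max M N) a)) in Tr. cbv beta in HM. lra. Qed.
End Ser.

Lemma lim_abs_le u l K : Un_cv u l -> (forall N, Rabs (u N) <= K) -> Rabs l <= K.
Proof. intros Hl H. apply Rnot_lt_le. intros Hlt. destruct (Hl (Rabs l - K) ltac:(lra)) as [M HM].
  specialize (HM M (le_n _)). specialize (H M). unfold Rdist in HM.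
  pose proof (Rabs_triang_inv l (u M)). rewrite <- Rabs_Ropp, Ropp_minus_distr in HM. lra. Qed.

Lemma cv_lin3 u0 u1 u2 l0 l1 l2 : Un_cv u0 l0 -> Un_cv u1 l1 -> Un_cv u2 l2 ->
  Un_cv (fun N => 2 * u1 N - u0 N - u2 N) (2 * l1 - l0 - l2).
Proof. intros H0 H1 H2. apply CV_minus; auto. apply CV_minus; auto.
  replace (2 * l1) with (l1 + l1) by ring. eapply (Un_cv_ext (fun N => u1 N + u1 N)); [intros; ring|].
  apply CV_plus; auto. Qed.

Lemma low_sum Y r N : Y > 1 ->
  rsum N (fun p => if (p <? r)%nat then Y^p else 0) = (Y^(Nat.min N r) - 1)/(Y - 1).
Proof. intros HY. induction N.
  - simpl. rewrite rsum_0. field. lra.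
  - rewrite rsum_S, IHN. destruct (Nat.ltb_spec N r).
    + rewrite Nat.min_l by lia. rewrite Nat.min_l by lia. simpl. field. lra.
    + rewrite !Nat.min_r by lia. ring. Qed.

Lemma high_sum th r N : th < 1 ->
  rsum N (fun p => if (p <? r)%nat then 0 else th^p) = (th^r - th^(Nat.max N r))/(1 - th).
Proof. intros Ht. induction N.
  - simpl. rewrite rsum_0. field. lra.
  - rewrite rsum_S, IHN. destruct (Nat.ltb_spec N r).
    + rewrite !Nat.max_r by lia. ring.
    + rewrite Nat.max_l by lia. rewrite Nat.max_l by lia. simpl. field. lra. Qed.

Lemma geo_sum th N : 0 <= th < 1 -> rsum N (fun p => th^p) <= 1/(1 - th).
Proof. intros Ht. rewrite (rsum_ext N _ (fun p => if (p <? 0)%nat then 0 else th^p)) by (intros; reflexivity).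
  rewrite high_sum by lra. simpl. pose proof (pow_le th (Nat.max N 0) ltac:(lra)).
  unfold Rdiv. apply Rmult_le_compat_r; [left; apply Rinv_0_lt_compat; lra|lra]. Qed.

Lemma two_part_sum (G Y th : R) (r N : nat) (A B : R) : Y > 1 -> 0 <= th < 1 -> 0 <= G -> 0 <= A -> 0 <= B ->
  rsum N (fun p => if (p <? r)%nat then G * Y^p * A else G * th^p * B)
  <= G * Y^r / (Y - 1) * A + G * th^r / (1 - th) * B.
Proof. intros HY Ht HG HA HB.
  rewrite (rsum_ext N _ (fun p => (if (p <? r)%nat then Y^p else 0) * (G * A) + (if (p <? r)%nat then 0 else th^p) * (G * B)))
    by (intros j _; destruct (j <? r)%nat; ring).
  rewrite rsum_plus, !rsum_scal, low_sum, high_sum by lra.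
  pose proof (Rle_pow Y (Nat.min N r) r ltac:(lra) (Nat.le_min_r _ _)).
  pose proof (pow_le th (Nat.max N r) ltac:(lra)).
  pose proof (Rinv_0_lt_compat (Y - 1) ltac:(lra)). pose proof (Rinv_0_lt_compat (1 - th) ltac:(lra)).
  apply Rplus_le_compat.
  - unfold Rdiv. replace (G * Y ^ r * / (Y - 1) * A) with (Y^r * / (Y - 1) * (G * A)) by ring.
    apply Rmult_le_compat_r; [nra|]. apply Rmult_le_compat_r; lra.
  - unfold Rdiv. replace (G * th ^ r * / (1 - th) * B) with (th^r * / (1 - th) * (G * B)) by ring.
    apply Rmult_le_compat_r; [nra|]. apply Rmult_le_compat_r; lra. Qed.

Lemma pow_div_distr x y r : y <> 0 -> (x / y)^r = x^r / y^r.
Proof. intros H. unfold Rdiv. rewrite Rpow_mult_distr, pow_inv. reflexivity. Qed.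

Definition ca x := Rpower 2 x.
Definition thc al be := 2/(ca al * ca be).
Definition Yc al be := 4/(ca al * ca be).
Definition Cq al be := 1/(2/ca be - 1) + 1/(2/ca al - 1).
Definition Cc al be := 1/(4*(Yc al be - 1)) + 1/(2*(1 - thc al be)).
Definition Cst al be := Cq al be * Cc al be.

Lemma Rp_nat x q : Rpower 2 (INR q * x) = (ca x)^q.
Proof. unfold ca. rewrite Rmult_comm, <- Rpower_mult, Rpower_pow; auto. apply exp_pos. Qed.

Lemma ca_pos x : 0 < ca x.
Proof. apply exp_pos. Qed.

Lemma ca_bounds x : 0 < x < 1 -> 1 < ca x < 2.
Proof. intros H. unfold ca. pose proof (Rpower_lt 2 0 x ltac:(lra) ltac:(lra)).
  pose proof (Rpower_lt 2 x 1 ltac:(lra) ltac:(lra)). rewrite Rpower_O in * by lra. rewrite Rpower_1 in * by lra. lra. Qed.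

Lemma ab_bounds al be : 0 < al < 1 -> 0 < be < 1 -> al + be > 1 -> 2 < ca al * ca be < 4.
Proof. intros H1 H2 H3. unfold ca. rewrite <- Rpower_plus.
  assert (E4 : Rpower 2 2 = 4). { replace 2 with (INR 2) at 2 by (simpl; lra). rewrite Rpower_pow by lra. simpl; ring. }
  pose proof (Rpower_lt 2 1 (al+be) ltac:(lra) ltac:(lra)).
  pose proof (Rpower_lt 2 (al+be) 2 ltac:(lra) ltac:(lra)). rewrite Rpower_1 in * by lra. lra. Qed.

Section Consts.
Variables (al be : R).
Hypothesis Ha : 0 < al < 1.
Hypothesis Hb : 0 < be < 1.
Hypothesis Hab : al + be > 1.

Lemma inv_m1_pos x : 1 < x < 2 -> 0 < 1/(2/x - 1).
Proof. intros H. apply Rdiv_lt_0_compat; [lra|]. apply Rlt_Rminus.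
  apply (Rmult_lt_reg_r x); [lra|]. unfold Rdiv. rewrite Rmult_assoc, Rinv_l; lra. Qed.

Lemma Cq_pos : 0 < Cq al be.
Proof. unfold Cq. pose proof (inv_m1_pos _ (ca_bounds _ Ha)). pose proof (inv_m1_pos _ (ca_bounds _ Hb)). lra. Qed.

Lemma th_bounds : 0 < thc al be < 1.
Proof. unfold thc. pose proof (ab_bounds al be Ha Hb Hab). split.
  - apply Rdiv_lt_0_compat; lra.
  - apply (Rmult_lt_reg_r (ca al * ca be)); [lra|]. unfold Rdiv. rewrite Rmult_assoc, Rinv_l; lra. Qed.

Lemma Y_gt1 : Yc al be > 1.
Proof. unfold Yc. pose proof (ab_bounds al be Ha Hb Hab).
  apply (Rmult_lt_reg_r (ca al * ca be)); [lra|]. unfold Rdiv. rewrite Rmult_assoc, Rinv_l; lra. Qed.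

Lemma Cc_pos : 0 < Cc al be.
Proof. unfold Cc. pose proof Y_gt1. pose proof th_bounds.
  assert (0 < 1/(4*(Yc al be - 1))) by (apply Rdiv_lt_0_compat; lra).
  assert (0 < 1/(2*(1 - thc al be))) by (apply Rdiv_lt_0_compat; lra). lra. Qed.

Lemma Cst_nonneg : 0 <= Cst al be.
Proof. unfold Cst. pose proof Cq_pos. pose proof Cc_pos. nra. Qed.
End Consts.

Lemma rsum_1 g : rsum 1 g = g 0%nat.
Proof. unfold rsum. simpl. ring. Qed.

Section Inst.
Variables (al be : R).
Hypothesis Ha : 0 < al < 1.
Hypothesis Hb : 0 < be < 1.
Hypothesis Hab : al + be > 1.
Variables (d n : nat) (v : R -> nat -> nat -> R) (w : R -> nat -> R) (Kv Kw : R).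
Hypothesis Hv : CalphaM n d al v Kv.
Hypothesis Hw : CalphaV d be w Kw.

Lemma Kv_nonneg : 0 <= Kv.
Proof. destruct Hv as [_ [H _]]. pose proof (mnorm_nonneg n d (v 0)). pose proof (exp_pos (- al * ln 2)).
  unfold Rpower in H. nra. Qed.
Lemma Kw_nonneg : 0 <= Kw.
Proof. destruct Hw as [_ [H _]]. pose proof (vnorm_nonneg d (w 0)). pose proof (exp_pos (- be * ln 2)).
  unfold Rpower in H. nra. Qed.

Lemma le_div_pow x K y q : 0 < y -> y^q * x <= K -> x <= K / y^q.
Proof. intros Hy H. pose proof (pow_lt y q Hy). apply (Rmult_le_reg_l (y^q)); auto.
  unfold Rdiv. rewrite <- Rmult_assoc, (Rmult_comm (y^q) K), Rmult_assoc, Rinv_r, Rmult_1_r; lra. Qed.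

Lemma Hvc i q m : (i < n)%nat -> (m <= 2^q)%nat ->
  rsum d (fun j => Rabs (coef (fun u => v u i j) q m)) <= Kv / (ca al)^q.
Proof. intros Hi Hm. destruct Hv as [_ [_ H]]. specialize (H q m Hm). rewrite Rp_nat in H.
  apply le_div_pow; [apply ca_pos|]. eapply Rle_trans; [|exact H].
  apply Rmult_le_compat_l; [left; apply pow_lt, ca_pos|].
  apply (mnorm_ge n d (fun i j => coef (fun u => v u i j) q m) i Hi). Qed.

Lemma Hwc j q m : (j < d)%nat -> (m <= 2^q)%nat ->
  Rabs (coef (fun u => w u j) q m) <= Kw / (ca be)^q.
Proof. intros Hj Hm. destruct Hw as [_ [_ H]]. specialize (H q m Hm). rewrite Rp_nat in H.
  apply le_div_pow; [apply ca_pos|]. eapply Rle_trans; [|exact H].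
  apply Rmult_le_compat_l; [left; apply pow_lt, ca_pos|].
  apply (vnorm_ge d (fun j => coef (fun u => w u j) q m) j Hj). Qed.

Definition Ew p := Kw * (2 / ca be)^p / (2 / ca be - 1).
Definition Ev p := Kv * (2 / ca al)^p / (2 / ca al - 1).

Lemma Sw j p k : (j < d)%nat -> (k < 2^p)%nat -> Rabs (sig (fun u => w u j) p k) <= Ew p.
Proof. intros Hj Hk. pose proof (sig_bound 1 (fun _ u => w u j) Kw (ca be) (ca_bounds _ Hb) Kw_nonneg) as S.
  assert (H1 : rsum 1 (fun _ => Rabs (w 1 j - w 0 j)) <= Kw).
  { rewrite rsum_1. pose proof (Hwc j 0 0 Hj ltac:(simpl; lia)) as H. simpl pow in H. unfold Rdiv in H. rewrite Rinv_1, Rmult_1_r in H. exact H. }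
  assert (H2 : forall q m, (1 <= m <= 2^q)%nat -> rsum 1 (fun _ => Rabs (coef (fun u => w u j) q m)) <= Kw / (ca be)^q).
  { intros q m Hm. rewrite rsum_1. apply Hwc; auto; lia. }
  pose proof (S H1 H2 p k Hk) as S'. rewrite rsum_1 in S'. exact S'. Qed.

Lemma Sv i p k : (i < n)%nat -> (k < 2^p)%nat -> rsum d (fun j => Rabs (sig (fun u => v u i j) p k)) <= Ev p.
Proof. intros Hi Hk. apply (sig_bound d (fun j u => v u i j) Kv (ca al) (ca_bounds _ Ha) Kv_nonneg); auto.
  - pose proof (Hvc i 0 0 Hi ltac:(simpl; lia)) as H. simpl pow in H. unfold Rdiv in H. rewrite Rinv_1, Rmult_1_r in H. exact H.
  - intros q m Hm. apply Hvc; auto; lia. Qed.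

Definition Bd p := Kv * Kw * Cq al be * (thc al be)^p.

Lemma Bd_nonneg p : 0 <= Bd p.
Proof. unfold Bd. pose proof Kv_nonneg. pose proof Kw_nonneg. pose proof (Cq_pos al be Ha Hb).
  pose proof (pow_le (thc al be) p ltac:(pose proof (th_bounds al be Ha Hb Hab); lra)).
  apply Rmult_le_pos; [|auto]. apply Rmult_le_pos; [|lra]. nra. Qed.

Lemma rho_pos x : 1 < x < 2 -> 0 < 2/x - 1 /\ 0 < 2 / x.
Proof. intros H. split; [|apply Rdiv_lt_0_compat; lra]. apply Rlt_Rminus.
  apply (Rmult_lt_reg_r x); [lra|]. unfold Rdiv. rewrite Rmult_assoc, Rinv_l; lra. Qed.

Lemma Ew_nonneg p : 0 <= Ew p.
Proof. unfold Ew. destruct (rho_pos _ (ca_bounds _ Hb)). pose proof Kw_nonneg.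
  pose proof (pow_le (2 / ca be) p ltac:(lra)). apply Rmult_le_pos; [nra|left; apply Rinv_0_lt_compat; lra]. Qed.

Lemma Qbound i p k : (i < n)%nat -> (1 <= p)%nat -> (k < 2^p)%nat ->
  Rabs (Q1 d v w i p k - Q2 d v w i p k) <= Bd p.
Proof. intros Hi Hp Hk.
  assert (B1 : Rabs (Q1 d v w i p k) <= Kv / (ca al)^p * Ew p).
  { unfold Q1. eapply Rle_trans; [apply rsum_abs_prod; intros j Hj; apply Sw; auto|].
    apply Rmult_le_compat_r; [apply Ew_nonneg|]. apply Hvc; auto. }
  assert (B2 : Rabs (Q2 d v w i p k) <= Ev p * (Kw / (ca be)^p)).
  { unfold Q2. eapply Rle_trans; [apply rsum_abs_prod; intros j Hj; apply Hwc; auto; lia|].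
    apply Rmult_le_compat_r; [|apply Sv; auto]. pose proof Kw_nonneg.
    pose proof (pow_lt _ p (ca_pos be)). unfold Rdiv. apply Rmult_le_pos; [lra|left; apply Rinv_0_lt_compat; lra]. }
  eapply Rle_trans; [apply Rabs_triang|]. rewrite Rabs_Ropp.
  eapply Rle_trans; [apply Rplus_le_compat; [exact B1|exact B2]|]. right.
  unfold Ew, Ev, Bd, Cq, thc. destruct (rho_pos _ (ca_bounds _ Ha)). destruct (rho_pos _ (ca_bounds _ Hb)).
  pose proof (ca_pos al). pose proof (ca_pos be). pose proof (ca_bounds _ Ha). pose proof (ca_bounds _ Hb).
  rewrite !pow_div_distr by (try apply Rmult_integral_contrapositive; lra). rewrite Rpow_mult_distr.
  field. repeat split; try lra; apply pow_nonzero; lra.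
Qed.

Definition Tf p i t := levy_term d v w p t i.

Lemma PSex i p : (i < n)%nat -> exists Q, PS p (Tf p i) Q /\ forall k, (k < 2^p)%nat -> Rabs (Q k) <= Bd p.
Proof. intros Hi. destruct p as [|p].
  - exists (fun _ => 0). split; [apply levy_PS0|]. intros. rewrite Rabs_R0. apply Bd_nonneg.
  - exists (fun k => Q1 d v w i (S p) k - Q2 d v w i (S p) k). split.
    + apply levy_PS. lia.
    + intros k Hk. apply Qbound; auto. lia. Qed.

Lemma Tf_bound p i t : (i < n)%nat -> 0 <= t <= 1 -> Rabs (Tf p i t) <= Bd p / 2.
Proof. intros Hi Ht. destruct (PSex i p Hi) as [Q [H1 H2]]. eapply T_bound; eauto. apply Bd_nonneg. Qed.

Lemma Tf_lip p i s t : (i < n)%nat -> 0 <= s <= 1 -> 0 <= t <= 1 -> Rabs (Tf p i t - Tf p i s) <= Bd p / 2 * Rabs (t - s).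
Proof. intros Hi Hs Ht. destruct (PSex i p Hi) as [Q [H1 H2]]. eapply T_lip; eauto. apply Bd_nonneg. Qed.

Lemma Tf_0 p i : (i < n)%nat -> Tf p i 0 = 0.
Proof. intros Hi. destruct (PSex i p Hi) as [Q [[H1 _] _]]. exact H1. Qed.

Lemma Tf_coef_any p i r m : (i < n)%nat -> (1 <= m <= 2^r)%nat ->
  Rabs (2 * Tf p i (t1 r m) - Tf p i (t0 r m) - Tf p i (t2 r m)) <= Bd p / 2 * / 2^r.
Proof. intros Hi Hm. destruct (PSex i p Hi) as [Q [H1 H2]]. eapply T_coef_any; eauto. apply Bd_nonneg. Qed.

Lemma Tf_coef_fine p i r m : (i < n)%nat -> (S p <= r)%nat -> (1 <= m <= 2^r)%nat ->
  Rabs (2 * Tf p i (t1 r m) - Tf p i (t0 r m) - Tf p i (t2 r m)) <= Bd p * 2^p * (/ 2^(S r))^2.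
Proof. intros Hi Hr Hm. destruct (PSex i p Hi) as [Q [H1 H2]]. eapply T_coef_fine; eauto. Qed.

Definition cS := Kv * Kw * Cq al be / 2.

Lemma th_b : 0 <= thc al be < 1.
Proof. pose proof (th_bounds al be Ha Hb Hab). lra. Qed.

Lemma cS_nonneg : 0 <= cS.
Proof. unfold cS. pose proof Kv_nonneg. pose proof Kw_nonneg. pose proof (Cq_pos al be Ha Hb).
  assert (0 <= Kv * Kw) by nra. unfold Rdiv. apply Rmult_le_pos; [nra|lra]. Qed.

Lemma Bd_half p : Bd p / 2 = cS * (thc al be)^p.
Proof. unfold Bd, cS. field. Qed.

Lemma abs_Tf p i t : (i < n)%nat -> 0 <= t <= 1 -> Rabs (Tf p i t) <= cS * (thc al be)^p.
Proof. intros. rewrite <- Bd_half. apply Tf_bound; auto. Qed.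

Definition Lf (t : R) (i : nat) : R :=
  epsilon (inhabits 0) (fun l => Un_cv (fun N => rsum N (fun p => Tf p i t)) l).

Lemma Lf_cv t i : (i < n)%nat -> 0 <= t <= 1 -> Un_cv (fun N => rsum N (fun p => Tf p i t)) (Lf t i).
Proof. intros Hi Ht. unfold Lf. apply epsilon_spec.
  apply (cvg_exists (fun p => Tf p i t) cS (thc al be) cS_nonneg th_b). intros p. apply abs_Tf; auto. Qed.

Lemma Lf_conv : levy_converges_to n d v w Lf.
Proof. intros eps He. pose proof th_b as Th. pose proof cS_nonneg.
  destruct (pow_lt_1_zero (thc al be) ltac:(rewrite Rabs_right; lra) (eps * (1 - thc al be) / (cS + 1)))
    as [N0 HN0]. { apply Rdiv_lt_0_compat; [apply Rmult_lt_0_compat|]; lra. }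
  exists N0. intros N HN t Ht i Hi. change (levy_partial d v w N t i) with (rsum N (fun p => Tf p i t)).
  eapply Rle_lt_trans; [apply (cvg_rate (fun p => Tf p i t) cS (thc al be) cS_nonneg th_b)|].
  - intros p. apply abs_Tf; auto.
  - apply Lf_cv; auto.
  - specialize (HN0 N HN). rewrite Rabs_right in HN0 by (apply Rle_ge, pow_le; lra).
    revert HN0. generalize (thc al be ^ N). intros x Hx.
    apply (Rmult_lt_reg_r (1 - thc al be)); [lra|]. unfold Rdiv. rewrite Rmult_assoc, Rinv_l, Rmult_1_r by lra.
    assert (x * (cS + 1) < eps * (1 - thc al be)).
    { apply (Rmult_lt_reg_r (/(cS+1))); [apply Rinv_0_lt_compat; lra|]. rewrite Rmult_assoc, Rinv_r, Rmult_1_r by lra. exact Hx. }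
    pose proof (pow_le (thc al be) N ltac:(lra)). nra. Qed.

Lemma Lf_lip i s t : (i < n)%nat -> 0 <= s <= 1 -> 0 <= t <= 1 ->
  Rabs (Lf t i - Lf s i) <= cS / (1 - thc al be) * Rabs (t - s).
Proof. intros Hi Hs Ht. pose proof th_b. pose proof cS_nonneg.
  apply (lim_abs_le (fun N => rsum N (fun p => Tf p i t) - rsum N (fun p => Tf p i s))).
  - apply CV_minus; apply Lf_cv; auto.
  - intros N. rewrite <- rsum_minus. eapply Rle_trans; [apply rsum_abs|].
    eapply Rle_trans; [apply (rsum_mono N _ (fun p => (thc al be)^p * (cS * Rabs (t - s))));
      intros p _; eapply Rle_trans; [apply Tf_lip; auto|]; rewrite Bd_half; right; ring|].
    rewrite rsum_scal. pose proof (geo_sum (thc al be) N ltac:(lra)).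
    pose proof (Rabs_pos (t - s)). replace (cS / (1 - thc al be) * Rabs (t - s)) with (1 / (1 - thc al be) * (cS * Rabs (t - s))) by (field; lra).
    apply Rmult_le_compat_r; [nra|auto]. Qed.

Lemma Lf_cont i : (i < n)%nat -> cont01 (fun t => Lf t i).
Proof. intros Hi t Ht eps He. pose proof th_b. pose proof cS_nonneg.
  set (Lam := cS / (1 - thc al be)).
  assert (HL : 0 <= Lam) by (unfold Lam; apply Rmult_le_pos; [lra|left; apply Rinv_0_lt_compat; lra]).
  exists (eps / (Lam + 1)). split; [apply Rdiv_lt_0_compat; lra|].
  intros s Hs Hst. eapply Rle_lt_trans; [apply Lf_lip; auto|]. fold Lam.
  apply Rle_lt_trans with (Lam * (eps / (Lam + 1))).
  - apply Rmult_le_compat_l; [lra|]. lra.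
  - assert (E : Lam * (eps / (Lam + 1)) = eps - eps / (Lam + 1)) by (field; lra). rewrite E. assert (0 < eps / (Lam + 1)) by (apply Rdiv_lt_0_compat; lra). lra. Qed.

Lemma Lf_0 i : (i < n)%nat -> Lf 0 i = 0.
Proof. intros Hi. pose proof (lim_abs_le _ _ 0 (Lf_cv 0 i Hi ltac:(lra))) as H.
  assert (Rabs (Lf 0 i) <= 0). { apply H. intros N. rewrite rsum_zero; [rewrite Rabs_R0; lra|]. intros; apply Tf_0; auto. }
  pose proof (Rabs_pos (Lf 0 i)). destruct (Req_dec (Lf 0 i) 0) as [|Hne]; auto. pose proof (Rabs_pos_lt _ Hne). lra. Qed.

Lemma rsum_lin3 N x y z : rsum N (fun p => 2 * x p - y p - z p) = 2 * rsum N x - rsum N y - rsum N z.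
Proof. rewrite !rsum_minus. rewrite (rsum_ext N _ (fun p => x p * 2)) by (intros; ring). rewrite rsum_scal. ring. Qed.

Definition GG := Kv * Kw * Cq al be.

Lemma GG_nonneg : 0 <= GG.
Proof. pose proof cS_nonneg. unfold cS in H. unfold GG. lra. Qed.

Lemma Lf_coef i r m : (i < n)%nat -> (1 <= m <= 2^r)%nat ->
  Rabs (2 * Lf (t1 r m) i - Lf (t0 r m) i - Lf (t2 r m) i) <= GG * Cc al be / (ca al * ca be)^r.
Proof. intros Hi Hm. pose proof (t0_nonneg r m ltac:(lia)). pose proof (t2_le1 r m ltac:(lia)).
  pose proof (tord r m). pose proof th_b as Th. pose proof (Y_gt1 al be Ha Hb Hab) as HY. pose proof GG_nonneg.
  pose proof (ab_bounds al be Ha Hb Hab) as AB.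
  apply (lim_abs_le (fun N => 2 * rsum N (fun p => Tf p i (t1 r m)) - rsum N (fun p => Tf p i (t0 r m)) - rsum N (fun p => Tf p i (t2 r m)))).
  - apply cv_lin3; apply Lf_cv; auto; lra.
  - intros N. rewrite <- rsum_lin3. eapply Rle_trans; [apply rsum_abs|].
    set (A := (/ 2^(S r))^2). set (B := / 2 * / 2^r).
    assert (HA : 0 <= A) by (unfold A; apply pow2_ge_0).
    assert (HB : 0 <= B) by (unfold B; pose proof (inv_pw2_pos r); lra).
    eapply Rle_trans; [apply (rsum_mono N _ (fun p => if (p <? r)%nat then GG * (Yc al be)^p * A else GG * (thc al be)^p * B))|].
    + intros p _. destruct (Nat.ltb_spec p r).
      * eapply Rle_trans; [apply Tf_coef_fine; auto|]. right. unfold Bd. fold GG. unfold A.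
        replace (Yc al be) with (thc al be * 2) by (unfold Yc, thc; pose proof (ca_pos al); pose proof (ca_pos be); field; split; lra). rewrite Rpow_mult_distr. ring.
      * eapply Rle_trans; [apply Tf_coef_any; auto|]. right. unfold Bd, B. fold GG. field. apply pw2_nz.
    + eapply Rle_trans; [apply two_part_sum; auto; lra|]. right.
      unfold Yc, thc, Cc, Yc, thc, A, B. rewrite !pow_div_distr by lra.
      replace 4 with (2*2) by ring. rewrite Rpow_mult_distr. simpl (2 ^ S r).
      pose proof (pw2_pos r). pose proof (pow_lt (ca al * ca be) r ltac:(lra)).
      pose proof (ca_pos al). pose proof (ca_pos be).
      field. repeat split; try lra.
Qed.

Lemma Lf_coef00 i : (i < n)%nat -> Rabs (Lf 1 i - Lf 0 i) <= GG * Cc al be.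
Proof. intros Hi. eapply Rle_trans; [apply Lf_lip; auto; lra|]. rewrite Rminus_0_r, Rabs_R1, Rmult_1_r.
  pose proof th_b. pose proof GG_nonneg. pose proof (Y_gt1 al be Ha Hb Hab).
  unfold cS, Cc. fold GG. assert (0 <= 1 / (4 * (Yc al be - 1))) by (unfold Rdiv; apply Rmult_le_pos; [lra|left; apply Rinv_0_lt_compat; lra]).
  replace (GG / 2 / (1 - thc al be)) with (GG * (1 / (2 * (1 - thc al be)))) by (field; lra). nra. Qed.

Lemma Lf_Calpha : CalphaV n (al + be) Lf (Cst al be * Kv * Kw).
Proof. pose proof GG_nonneg. pose proof (Cc_pos al be Ha Hb Hab) as HCc.
  assert (EC : Cst al be * Kv * Kw = GG * Cc al be) by (unfold Cst, GG; ring).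
  split; [intros i Hi; apply Lf_cont; auto|]. rewrite EC. split.
  - assert (vnorm n (Lf 0) <= 0) by (apply vnorm_le; [lra|]; intros i Hi; rewrite Lf_0 by auto; rewrite Rabs_R0; lra).
    pose proof (vnorm_nonneg n (Lf 0)). replace (vnorm n (Lf 0)) with 0 by lra. rewrite Rmult_0_r. nra.
  - intros r m Hm. rewrite Rp_nat. unfold ca at 1. rewrite Rpower_plus. fold (ca al) (ca be).
    pose proof (ab_bounds al be Ha Hb Hab). pose proof (pow_lt (ca al * ca be) r ltac:(lra)) as Hp.
    assert (Hv' : vnorm n (fun i => coef (fun u => Lf u i) r m) <= GG * Cc al be / (ca al * ca be)^r).
    { apply vnorm_le. { unfold Rdiv. apply Rmult_le_pos; [nra|left; apply Rinv_0_lt_compat; lra]. }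
      intros i Hi. destruct m as [|m'].
      - destruct r as [|r'].
        + simpl coef. simpl pow. rewrite Rdiv_1_r. apply Lf_coef00; auto.
        + simpl coef. rewrite Rabs_R0. unfold Rdiv. apply Rmult_le_pos; [nra|left; apply Rinv_0_lt_compat; lra].
      - apply Lf_coef; auto. lia. }
    apply Rle_trans with ((ca al * ca be)^r * (GG * Cc al be / (ca al * ca be)^r)).
    + apply Rmult_le_compat_l; lra.
    + right. field. lra. Qed.
End Inst.

Theorem mainTheorem7 (alpha beta : R)
  (Ha : 0 < alpha < 1) (Hb : 0 < beta < 1) (Hab : alpha + beta > 1) :
  exists C : R, 0 <= C /\
    forall (d n : nat) (v : R -> nat -> nat -> R) (w : R -> nat -> R) (Kv Kw : R),
      CalphaM n d alpha v Kv ->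
      CalphaV d beta w Kw ->
      exists L : R -> nat -> R,
        levy_converges_to n d v w L /\
        CalphaV n (alpha + beta) L (C * Kv * Kw).
Proof.
  exists (Cst alpha beta). split; [apply Cst_nonneg; auto|].
  intros d n v w Kv Kw Hv Hw.
  exists (Lf d v w). split.
  - exact (Lf_conv alpha beta Ha Hb Hab d n v w Kv Kw Hv Hw).
  - exact (Lf_Calpha alpha beta Ha Hb Hab d n v w Kv Kw Hv Hw).
Qed.
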